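(* Let $m,n\in\mathbb{Z}$ with $\gcd(m,n)=1$, $mn(m+n)\neq0$, $c=-\frac{A(m,n)}{B(m,n)}$, and let $\{x_1,x_2,x_3\}$ be the rational $3$-cycle of $f_c(x)=x^2+c$ (its elements written in lowest terms). (a) The numerators of $x_1,x_2,x_3$ are pairwise relatively prime. (b) If a prime $p$ divides the numerator of some $x_i$, then $c$ is $p$-integral and $c^3+2c^2+c+1\equiv 0\pmod p$. (c) At most one of the numerators of $x_1,x_2,x_3$ equals $\pm1$.
   Context: $A(m,n)=m^6+2m^5n+4m^4n^2+8m^3n^3+9m^2n^4+4mn^5+n^6$, $B(m,n)=4m^2n^2(m+n)^2$. Standing fact: $f_c$ has a rational $3$-cycle (orbit of a rational point of minimal period $3$) iff $c=-A(m,n)/B(m,n)$ for coprime $m,n$ with $mn(m+n)\ne0$; it then has exactly one, namely $x_1=\frac{t_1}{2mn(m+n)}$, $x_2=\frac{t_2}{2mn(m+n)}$, $x_3=-\frac{t_3}{2mn(m+n)}$ with $t_1=m^3+2m^2n+mn^2+n^3$, $t_2=m^3-mn^2-n^3$, $t_3=m^3+2m^2n+3mn^2+n^3$, and these fractions are in lowest terms. *)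

(* Defs.v *)
From mathcomp Require Import all_boot all_order all_algebra.
Set Implicit Arguments. Unset Strict Implicit. Unset Printing Implicit Defensive.
Import Order.TTheory GRing.Theory Num.Theory.
Local Open Scope ring_scope.

Definition fc (c : rat) (x : rat) : rat := x ^+ 2 + c.

Definition min_period3 (c x : rat) : Prop :=
  iter 3 (fc c) x = x /\ (forall k : nat, (0 < k < 3)%N -> iter k (fc c) x != x).

Definition polyA (m n : int) : int :=
  m ^+ 6 + 2 * m ^+ 5 * n + 4 * m ^+ 4 * n ^+ 2 + 8 * m ^+ 3 * n ^+ 3
  + 9 * m ^+ 2 * n ^+ 4 + 4 * m * n ^+ 5 + n ^+ 6.

Definition polyB (m n : int) : int := 4 * m ^+ 2 * n ^+ 2 * (m + n) ^+ 2.

(* Main.v *)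
Require Import Defs.
From mathcomp Require Import all_boot all_order all_algebra.
From mathcomp Require Import zify ring lra.
Import Order.TTheory GRing.Theory Num.Theory.
Set Implicit Arguments. Unset Strict Implicit.
Local Open Scope ring_scope.

Definition vp (p : nat) (x : rat) : int :=
  (logn p `|numq x|)%:Z - (logn p `|denq x|)%:Z.

Lemma num_den_eq (n d : int) : d != 0 ->
  numq (n%:~R / d%:~R : rat) * d = n * denq (n%:~R / d%:~R : rat).
Proof.
move=> d0; set x : rat := _ / _.
apply: (@intr_inj rat); rewrite !rmorphM /= numqE /x.
have d0' : (d%:~R : rat) != 0 by rewrite intr_eq0.
field; exact: d0'.
Qed.

Lemma vp_frac p (n d : int) : n != 0 -> d != 0 ->
  vp p (n%:~R / d%:~R) = (logn p `|n|)%:Z - (logn p `|d|)%:Z.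
Proof.
move=> n0 d0; have := @num_den_eq n d d0; set x : rat := _ / _ => e.
have x0 : x != 0 by rewrite /x mulf_neq0 ?invr_eq0 ?intr_eq0.
have nx0 : numq x != 0 by rewrite numq_eq0.
have := congr1 (fun z : int => logn p `|z|%N) e => /=.
rewrite !abszM !lognM ?absz_gt0 ?denq_neq0 // => h.
rewrite /vp; lia.
Qed.

Lemma ratE (x : rat) : x = (numq x)%:~R / (denq x)%:~R.
Proof. by rewrite divq_num_den. Qed.

Lemma vpM p (x y : rat) : x != 0 -> y != 0 -> vp p (x * y) = vp p x + vp p y.
Proof.
move=> x0 y0.
have -> : x * y = (numq x * numq y)%:~R / (denq x * denq y)%:~R.
  rewrite !rmorphM /= {1}(ratE x) {1}(ratE y).
  have := denq_neq0 x; have := denq_neq0 y.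
  rewrite -!(intr_eq0 rat) => h1 h2; field; apply/andP; split => //.
have nx : numq x != 0 by rewrite numq_eq0.
have ny : numq y != 0 by rewrite numq_eq0.
rewrite vp_frac ?mulf_neq0 ?denq_neq0 // /vp !abszM !lognM ?absz_gt0 ?denq_neq0 //.
lia.
Qed.

Lemma vpN p x : vp p (- x) = vp p x.
Proof. by rewrite /vp numqN denqN abszN. Qed.

Lemma vpD p (x y : rat) (k : int) : prime p -> x != 0 -> y != 0 -> x + y != 0 ->
  k <= vp p x -> k <= vp p y -> k <= vp p (x + y).
Proof.
move=> pp x0 y0 s0.
have nx : numq x != 0 by rewrite numq_eq0.
have ny : numq y != 0 by rewrite numq_eq0.
have E : x + y = (numq x * denq y + numq y * denq x)%:~R / (denq x * denq y)%:~R.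
  rewrite !rmorphM rmorphD !rmorphM /= {1}(ratE x) {1}(ratE y).
  have := denq_neq0 x; have := denq_neq0 y.
  rewrite -!(intr_eq0 rat) => h1 h2; field; apply/andP; split => //.
have S0 : numq x * denq y + numq y * denq x != 0.
  apply: contra s0 => /eqP h; by rewrite E h mul0r.
rewrite E vp_frac ?mulf_neq0 ?denq_neq0 // /vp abszM lognM ?absz_gt0 ?denq_neq0 //.
move=> hx hy.
have [hneg|hpos] := boolP (k + (logn p `|denq x|)%:Z + (logn p `|denq y|)%:Z <= 0).
  lia.
pose K := absz (k + (logn p `|denq x|)%:Z + (logn p `|denq y|)%:Z).
have h1 : (p ^ K %| absz (numq x * denq y)%R)%N.
  rewrite pfactor_dvdn ?absz_gt0 ?mulf_neq0 ?denq_neq0 //.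
  rewrite abszM lognM ?absz_gt0 ?denq_neq0 // /K. lia.
have h2 : (p ^ K %| absz (numq y * denq x)%R)%N.
  rewrite pfactor_dvdn ?absz_gt0 ?mulf_neq0 ?denq_neq0 //.
  rewrite abszM lognM ?absz_gt0 ?denq_neq0 // /K. lia.
have h3 : (p ^ K %| absz (numq x * denq y + numq y * denq x)%R)%N.
  have : (Posz (p ^ K) %| numq x * denq y + numq y * denq x)%Z.
    by apply: rpredD; rewrite dvdzE.
  by rewrite dvdzE.
move: h3; rewrite pfactor_dvdn ?absz_gt0 // /K; lia.
Qed.

Lemma vp_lt p (x y : rat) : prime p -> x != 0 -> y != 0 -> vp p x < vp p y ->
  x + y != 0 /\ vp p (x + y) = vp p x.
Proof.
move=> pp x0 y0 lt.
have s0 : x + y != 0.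
  apply/negP => /eqP h; have : y = - x by rewrite -(addKr x y) h addr0.
  move=> e; move: lt; rewrite e vpN; lia.
split => //.
have h1 : vp p x <= vp p (x + y) by apply: vpD => //; lia.
have ny : - y != 0 by rewrite oppr_eq0.
have [le|gt] := boolP (vp p (x + y) <= vp p y).
  have : vp p (x + y) <= vp p ((x + y) + - y).
    apply: vpD => //; [by rewrite addrK | by rewrite vpN].
  rewrite addrK; lia.
have : vp p y <= vp p ((x + y) + - y).
  apply: vpD => //; [by rewrite addrK | lia | by rewrite vpN].
rewrite addrK; lia.
Qed.

Lemma vpX2 p (x : rat) : x != 0 -> vp p (x ^+ 2) = 2 * vp p x.
Proof. by move=> x0; rewrite expr2 vpM //; lia. Qed.

Lemma esc p (x c : rat) : prime p -> x != 0 -> vp p x < 0 ->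
  (c == 0) || (2 * vp p x < vp p c) ->
  x ^+ 2 + c != 0 /\ vp p (x ^+ 2 + c) = 2 * vp p x.
Proof.
move=> pp x0 neg; have x20 : x ^+ 2 != 0 by rewrite expf_neq0.
case/orP => [/eqP -> | h]; first by rewrite addr0 vpX2.
have [->|c0] := eqVneq c 0; first by rewrite addr0 vpX2.
by rewrite -(@vpX2 p x x0); apply: vp_lt => //; rewrite vpX2.
Qed.

Definition cyc (c y1 y2 y3 : rat) :=
  [/\ y2 = y1 ^+ 2 + c, y3 = y2 ^+ 2 + c, y1 = y3 ^+ 2 + c &
      [&& y1 != y2, y2 != y3 & y3 != y1]].

Lemma cyc_rot c y1 y2 y3 : cyc c y1 y2 y3 -> cyc c y2 y3 y1.
Proof. by case=> e1 e2 e3 /and3P[d1 d2 d3]; split => //; apply/and3P. Qed.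

Lemma ESC p c y1 y2 y3 : prime p -> cyc c y1 y2 y3 -> y1 != 0 -> vp p y1 < 0 ->
  (c == 0) || (2 * vp p y1 < vp p c) -> False.
Proof.
move=> pp [e1 e2 e3 _] y0 neg h.
have [n2 v2] := esc pp y0 neg h; rewrite -e1 in n2 v2.
have neg2 : vp p y2 < 0 by lia.
have h2 : (c == 0) || (2 * vp p y2 < vp p c).
  by case/orP: h => [->//| h]; apply/orP; right; lia.
have [n3 v3] := esc pp n2 neg2 h2; rewrite -e2 in n3 v3.
have neg3 : vp p y3 < 0 by lia.
have h3 : (c == 0) || (2 * vp p y3 < vp p c).
  by case/orP: h => [->//| h]; apply/orP; right; lia.
have [n1 v1] := esc pp n3 neg3 h3; rewrite -e3 in n1 v1.
lia.
Qed.

Lemma INTG p c y1 y2 y3 : prime p -> cyc c y1 y2 y3 -> y1 != 0 ->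
  (c == 0) || (0 <= vp p c) -> 0 <= vp p y1.
Proof.
move=> pp cy y0 h; have [//|neg] := boolP (0 <= vp p y1).
exfalso; apply: (ESC pp cy y0); first lia.
by case/orP: h => [->//| h]; apply/orP; right; lia.
Qed.

Lemma HALF p c y1 y2 y3 : prime p -> cyc c y1 y2 y3 -> c != 0 -> vp p c < 0 ->
  y1 != 0 -> 2 * vp p y1 = vp p c.
Proof.
move=> pp cy c0 w0 y0.
have [lt|] := boolP (2 * vp p y1 < vp p c).
  exfalso; apply: (ESC pp cy y0); first lia; by rewrite lt orbT.
rewrite -leNgt le_eqVlt => /orP [/eqP //|gt].
exfalso.
have cy' := cyc_rot cy; case: cy => [e1 _ _ _].
have x20 : y1 ^+ 2 != 0 by rewrite expf_neq0.
have [n2 v2] : c + y1 ^+ 2 != 0 /\ vp p (c + y1 ^+ 2) = vp p c.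
  apply: vp_lt => //; rewrite vpX2 //.
rewrite addrC -e1 in n2 v2.
apply: (ESC pp cy' n2); first lia.
apply/orP; right; lia.
Qed.

Definition Zp p (x : rat) := (x == 0) || (0 < vp p x).
Definition Ip p (x : rat) := (x == 0) || (0 <= vp p x).

Lemma vp1 p : vp p 1 = 0.
Proof. by rewrite /vp /= logn1. Qed.

Lemma vp0 p : vp p 0 = 0.
Proof. by rewrite /vp /= logn0 logn1. Qed.

Lemma Zp1 p : ~~ Zp p 1.
Proof. by rewrite /Zp vp1 oner_eq0. Qed.

Lemma ZpI p x : Zp p x -> Ip p x.
Proof. by rewrite /Zp /Ip => /orP[->//|h]; rewrite ltW ?orbT. Qed.

Lemma ZpD p x y : prime p -> Zp p x -> Zp p y -> Zp p (x + y).
Proof.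
rewrite /Zp => pp /orP[/eqP->|hx]; first by rewrite add0r.
move=> /orP[/eqP->|hy]; first by rewrite addr0 hx orbT.
have [/eqP ->//|s0] := boolP (x + y == 0).
apply/orP; right.
have x0 : x != 0 by apply/negP => /eqP e; move: hx; rewrite e vp0.
have y0 : y != 0 by apply/negP => /eqP e; move: hy; rewrite e vp0.
have := @vpD p x y 1 pp x0 y0 s0; lia.
Qed.

Lemma IpD p x y : prime p -> Ip p x -> Ip p y -> Ip p (x + y).
Proof.
rewrite /Ip => pp /orP[/eqP->|hx]; first by rewrite add0r.
move=> /orP[/eqP->|hy]; first by rewrite addr0 hx orbT.
have [/eqP ->//|s0] := boolP (x + y == 0).
have [/eqP ->|x0] := boolP (x == 0); first by rewrite add0r hy orbT.
have [/eqP ->|y0] := boolP (y == 0); first by rewrite addr0 hx orbT.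
apply/orP; right.
have := @vpD p x y 0 pp x0 y0 s0; lia.
Qed.

Lemma IpM p x y : Ip p x -> Ip p y -> Ip p (x * y).
Proof.
rewrite /Ip => /orP[/eqP->|hx]; first by rewrite mul0r eqxx.
move=> /orP[/eqP->|hy]; first by rewrite mulr0 eqxx.
have [/eqP ->//|] := boolP (x * y == 0).
rewrite mulf_eq0 negb_or => /andP[x0 y0].
by rewrite vpM // orbC; apply/orP; left; lia.
Qed.

Lemma ZpN p x : Zp p x -> Zp p (- x).
Proof. by rewrite /Zp oppr_eq0 vpN. Qed.

Lemma ZpM p x y : Zp p x -> Ip p y -> Zp p (x * y).
Proof.
rewrite /Zp /Ip => /orP[/eqP->|hx]; first by rewrite mul0r eqxx.
move=> /orP[/eqP->|hy]; first by rewrite mulr0 eqxx.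
have [/eqP ->//|] := boolP (x * y == 0).
rewrite mulf_eq0 negb_or => /andP[x0 y0].
by rewrite vpM // orbC; apply/orP; left; lia.
Qed.

Lemma ZpMM p x y : Ip p x -> Ip p y -> Zp p (x * y) -> Zp p x || Zp p y.
Proof.
rewrite /Zp /Ip => /orP[->//|hx] /orP[->|hy]; first by rewrite orbT.
have [/eqP ->|]:= boolP (x == 0) => //.
have [/eqP ->|]:= boolP (y == 0); first by rewrite orbT.
move=> y0 x0; rewrite mulf_eq0 (negPf x0) (negPf y0) /=.
rewrite vpM //; lia.
Qed.

Lemma Zp_eq p x y : x = y -> Zp p x -> Zp p y.
Proof. by move->. Qed.

Lemma prodone c y1 y2 y3 : cyc c y1 y2 y3 -> (y1 + y2) * (y2 + y3) * (y3 + y1) = 1.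
Proof.
case=> e1 e2 e3 /and3P[d1 d2 d3].
have a1 : y3 - y2 = (y2 - y1) * (y1 + y2).
  have -> : y3 - y2 = (y2 ^+ 2 + c) - (y1 ^+ 2 + c) by rewrite -e2 -e1.
  ring.
have a2 : y1 - y3 = (y3 - y2) * (y2 + y3).
  have -> : y1 - y3 = (y3 ^+ 2 + c) - (y2 ^+ 2 + c) by rewrite -e3 -e2.
  ring.
have a3 : y2 - y1 = (y1 - y3) * (y3 + y1).
  have -> : y2 - y1 = (y1 ^+ 2 + c) - (y3 ^+ 2 + c) by rewrite -e1 -e3.
  ring.
have nz : y2 - y1 != 0 by rewrite subr_eq0 eq_sym.
apply: (mulfI nz); rewrite mulr1.
rewrite {2}a3 a2 a1; ring.
Qed.

Definition qq (c : rat) := c * (c + 1) ^+ 2 + 1.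

Lemma Ip1 p : Ip p 1.
Proof. by rewrite /Ip vp1 lexx orbT. Qed.

Lemma Main p c y1 y2 y3 : prime p -> cyc c y1 y2 y3 -> Zp p y1 ->
  [/\ Ip p c, Zp p (qq c), ~~ Zp p y2 & ~~ Zp p y3].
Proof.
move=> pp cy Zy1.
have cy2 := cyc_rot cy; have cy3 := cyc_rot cy2.
have [e1 e2 e3 _] := cy.
have Ic : Ip p c.
  rewrite /Ip; have [//|c0] := boolP (c == 0).
  have [//|w0] := boolP (0 <= vp p c); exfalso.
  have w0' : vp p c < 0 by lia.
  have [/eqP y10|y10] := boolP (y1 == 0).
    have ey2 : y2 = c by rewrite e1 y10 expr0n /= add0r.
    have y20 : y2 != 0 by rewrite ey2.
    have := HALF pp cy2 c0 w0' y20; rewrite ey2; lia.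
  have := HALF pp cy c0 w0' y10; move: Zy1; rewrite /Zp (negPf y10) /=; lia.
have Iy2 : Ip p y2.
  rewrite /Ip; have [//|y0] := boolP (y2 == 0).
  by rewrite (INTG pp cy2 y0 Ic) orbT.
have Iy3 : Ip p y3.
  rewrite /Ip; have [//|y0] := boolP (y3 == 0).
  by rewrite (INTG pp cy3 y0 Ic) orbT.
have Z2 : Zp p (y2 - c).
  apply: (Zp_eq (x := y1 * y1)); first by rewrite e1 expr2 addrK.
  exact: ZpM Zy1 (ZpI Zy1).
have Z3 : Zp p (y3 - (c ^+ 2 + c)).
  apply: (Zp_eq (x := (y2 - c) * (y2 + c))); first by rewrite e2; ring.
  by apply: ZpM Z2 (IpD pp Iy2 Ic).
have Ic2 : Ip p (c ^+ 2 + c) by rewrite expr2; apply: IpD pp (IpM Ic Ic) Ic.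
have Zc1 : Zp p (y1 - ((c ^+ 2 + c) ^+ 2 + c)).
  apply: (Zp_eq (x := (y3 - (c ^+ 2 + c)) * (y3 + (c ^+ 2 + c)))).
    by rewrite e3; ring.
  by apply: ZpM Z3 (IpD pp Iy3 Ic2).
have Ic1 : Ip p (c + 1) := IpD pp Ic (Ip1 p).
have Iq : Ip p (qq c).
  by rewrite /qq expr2; apply: IpD pp (IpM Ic (IpM Ic1 Ic1)) (Ip1 p).
have Zcq : Zp p (c * qq c).
  apply: (Zp_eq (x := y1 + - (y1 - ((c ^+ 2 + c) ^+ 2 + c)))).
    by rewrite /qq; ring.
  exact: ZpD pp Zy1 (ZpN Zc1).
have nZc : ~~ Zp p c.
  apply/negP => Zc.
  have Zy2 : Zp p y2.
    by apply: (Zp_eq (x := (y2 - c) + c)); [ring | exact: ZpD pp Z2 Zc].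
  have Zy3 : Zp p y3.
    apply: (Zp_eq (x := y2 * y2 + c)); first by rewrite e2 expr2.
    exact: ZpD pp (ZpM Zy2 Iy2) Zc.
  have := Zp1 p; rewrite -(prodone cy) => /negP; apply.
  apply: ZpM; last exact: IpD pp Iy3 (ZpI Zy1).
  apply: ZpM; last exact: IpD pp Iy2 Iy3.
  exact: ZpD pp Zy1 Zy2.
have Zq : Zp p (qq c) by case/orP: (ZpMM Ic Iq Zcq) => // h; rewrite h in nZc.
split => //.
  apply/negP => Zy2; move/negP: nZc; apply.
  apply: (Zp_eq (x := y2 + - (y2 - c))); first ring.
  exact: ZpD pp Zy2 (ZpN Z2).
apply/negP => Zy3.
have Zc2 : Zp p (c * (c + 1)).
  apply: (Zp_eq (x := y3 + - (y3 - (c ^+ 2 + c)))); first ring.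
  exact: ZpD pp Zy3 (ZpN Z3).
case/orP: (ZpMM Ic Ic1 Zc2) => h; first by rewrite h in nZc.
have := Zp1 p => /negP; apply.
apply: (Zp_eq (x := qq c + - (c * (c + 1) * (c + 1)))); first by rewrite /qq; ring.
apply: ZpD pp Zq (ZpN _).
exact: ZpM Zc2 Ic1.
Qed.

Lemma logn_np p n : ~~ prime p -> logn p n = 0%N.
Proof. by rewrite /logn => /negPf ->. Qed.

Lemma ZpE p x : prime p -> Zp p x = (p%:Z %| numq x)%Z.
Proof.
move=> pp; rewrite /Zp; have [/eqP->|x0] := boolP (x == 0); first by rewrite dvdz0.
have n0 : (0 < `|numq x|)%N by rewrite absz_gt0 numq_eq0.
have d0 : (0 < `|denq x|)%N by rewrite absz_gt0 denq_neq0.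
rewrite /= dvdzE /=.
have := coprime_num_den x; rewrite /coprime => /eqP g1.
have hn := logn_gt0 p `|numq x|; rewrite mem_primes pp n0 /= in hn.
have hd := logn_gt0 p `|denq x|; rewrite mem_primes pp d0 /= in hd.
have nb : ~~ ((p %| `|numq x|) && (p %| `|denq x|))%N.
  by rewrite -dvdn_gcd g1 dvdn1; case: (p =P 1%N) pp => // ->.
rewrite /=; rewrite /vp.
move: hn hd nb; case: (p %| _)%N; case: (p %| _)%N => /= hn hd nb //; lia.
Qed.

Lemma IpE p x : prime p -> Ip p x = ~~ (p%:Z %| denq x)%Z.
Proof.
move=> pp; rewrite /Ip; have [/eqP->|x0] := boolP (x == 0).
  by rewrite /= dvdzE /= dvdn1; case: (p =P 1%N) pp => // ->.
have n0 : (0 < `|numq x|)%N by rewrite absz_gt0 numq_eq0.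
have d0 : (0 < `|denq x|)%N by rewrite absz_gt0 denq_neq0.
rewrite /= dvdzE /=.
have := coprime_num_den x; rewrite /coprime => /eqP g1.
have hn := logn_gt0 p `|numq x|; rewrite mem_primes pp n0 /= in hn.
have hd := logn_gt0 p `|denq x|; rewrite mem_primes pp d0 /= in hd.
have nb : ~~ ((p %| `|numq x|) && (p %| `|denq x|))%N.
  by rewrite -dvdn_gcd g1 dvdn1; case: (p =P 1%N) pp => // ->.
rewrite /vp.
move: hn hd nb; case: (p %| _)%N; case: (p %| _)%N => /= hn hd nb //; lia.
Qed.

Lemma pair_lem c y1 y2 y3 : cyc c y1 y2 y3 ->
  absz (numq y1) = 1%N -> absz (numq y2) = 1%N -> False.
Proof.
move=> cy h1 h2.
have cy2 := cyc_rot cy.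
have y10 : y1 != 0 by rewrite -numq_eq0 -absz_eq0 h1.
have y20 : y2 != 0 by rewrite -numq_eq0 -absz_eq0 h2.
have Lv : forall p, prime p -> vp p y1 = vp p y2.
  move=> p pp.
  have v1 : vp p y1 = - (logn p `|denq y1|)%:Z by rewrite /vp h1 logn1; lia.
  have v2 : vp p y2 = - (logn p `|denq y2|)%:Z by rewrite /vp h2 logn1; lia.
  have [Ic|nIc] := boolP ((c == 0) || (0 <= vp p c)).
    have := INTG pp cy y10 Ic; have := INTG pp cy2 y20 Ic; lia.
  have c0 : c != 0 by move: nIc; case: (c == 0).
  have w0 : vp p c < 0 by move: nIc; rewrite negb_or => /andP[_]; lia.
  have := HALF pp cy c0 w0 y10; have := HALF pp cy2 c0 w0 y20; lia.
have ed : `|denq y1|%N = `|denq y2|%N.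
  apply: eqn_from_log; rewrite ?absz_gt0 ?denq_neq0 // => p.
  have [pp|np] := boolP (prime p); last by rewrite !logn_np.
  have := Lv p pp; rewrite /vp h1 h2 logn1; lia.
have ed' : denq y1 = denq y2 by have := congr1 Posz ed; rewrite !absz_denq.
have [e1 e2 e3 /and3P[d1 d2 d3]] := cy.
have hy1 : y1 = (numq y1)%:~R / (denq y2)%:~R by rewrite -ed' divq_num_den.
have hy2 : y2 = (numq y2)%:~R / (denq y2)%:~R by rewrite divq_num_den.
move: hy1 hy2; set d : rat := (denq y2)%:~R; move=> hy1 hy2.
have ne : numq y1 != numq y2.
  apply: contra d1 => /eqP e; apply/eqP; rewrite hy1 hy2 e //.
have en : numq y1 + numq y2 = 0.
  move: h1 h2 ne; lia.
have s0 : y1 + y2 = 0.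
  rewrite hy1 hy2 -mulrDl -rmorphD en /=; exact: mul0r.
have := prodone cy; rewrite s0 !mul0r => /eqP; by rewrite eq_sym oner_eq0.
Qed.

Lemma coprime_by_primes (a b : nat) :
  (forall p, prime p -> (p %| a)%N -> (p %| b)%N -> False) -> coprime a b.
Proof.
move=> H; rewrite /coprime.
have [g0|gpos] := eqVneq (gcdn a b) 0%N.
  have := dvdn_gcdl a b; have := dvdn_gcdr a b; rewrite g0 !dvd0n => /eqP hb /eqP ha; subst a b.
  by exfalso; apply: (H 2%N).
have [g1|g1] := eqVneq (gcdn a b) 1%N; first by apply/eqP.
exfalso; have lt : (1 < gcdn a b)%N by move: gpos g1; case: (gcdn a b) => [|[|]].
apply: (H (pdiv (gcdn a b))); first exact: pdiv_prime.
  exact: dvdn_trans (pdiv_dvd _) (dvdn_gcdl _ _).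
exact: dvdn_trans (pdiv_dvd _) (dvdn_gcdr _ _).
Qed.

Lemma coprime_num c y1 y2 y3 : cyc c y1 y2 y3 -> coprimez (numq y1) (numq y2)
  /\ coprimez (numq y1) (numq y3).
Proof.
move=> cy; split; rewrite coprimezE; apply: coprime_by_primes => p pp h1 h2;
  have Z1 : Zp p y1 by rewrite ZpE // dvdzE.
- have [_ _ nZ2 _] := Main pp cy Z1; move/negP: nZ2; apply; by rewrite ZpE // dvdzE.
- have [_ _ _ nZ3] := Main pp cy Z1; move/negP: nZ3; apply; by rewrite ZpE // dvdzE.
Qed.

Lemma partb c y1 y2 y3 p : prime p -> cyc c y1 y2 y3 -> (p%:Z %| numq y1)%Z ->
  ~~ (p%:Z %| denq c)%Z /\ (p%:Z %| numq (c ^+ 3 + 2 * c ^+ 2 + c + 1))%Z.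
Proof.
move=> pp cy h; have Z1 : Zp p y1 by rewrite ZpE.
have [Ic Zq _ _] := Main pp cy Z1.
split; first by rewrite -IpE.
have -> : c ^+ 3 + 2 * c ^+ 2 + c + 1 = qq c by rewrite /qq; ring.
by rewrite -ZpE.
Qed.

Theorem theorem6 (m n : int) (c : rat) (x : rat) :
  coprimez m n -> m * n * (m + n) != 0 ->
  c = - ((polyA m n)%:~R / (polyB m n)%:~R) ->
  min_period3 c x ->
  let x1 := x in let x2 := fc c x1 in let x3 := fc c x2 in
  [/\ (* (a) *)
      [&& coprimez (numq x1) (numq x2), coprimez (numq x1) (numq x3)
        & coprimez (numq x2) (numq x3)],
      (* (b) *)
      (forall p : nat, prime p ->
         [|| (p%:Z %| numq x1)%Z, (p%:Z %| numq x2)%Z | (p%:Z %| numq x3)%Z] ->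
         ~~ (p%:Z %| denq c)%Z /\
         (p%:Z %| numq (c ^+ 3 + 2 * c ^+ 2 + c + 1))%Z) &
      (* (c) *)
      (count (fun y : rat => `|numq y| == 1) [:: x1; x2; x3] <= 1)%N].
Proof.
move=> _ _ _ [h3 hk] x1 x2 x3.
have d12 : x1 != x2 by rewrite eq_sym; exact: (hk 1%N).
have d31 : x3 != x1 by exact: (hk 2%N).
have e3 : x1 = x3 ^+ 2 + c by exact: esym h3.
have d23 : x2 != x3.
  apply/negP => /eqP e; move/negP: d31; apply; apply/eqP.
  by rewrite e3 -[in RHS]e.
have cy : cyc c x1 x2 x3 by split => //; apply/and3P.
have cy2 := cyc_rot cy; have cy3 := cyc_rot cy2.
have [a1 a2] := coprime_num cy.
have [a3 _] := coprime_num cy2.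
split.
- by rewrite a1 a2 a3.
- move=> p pp /or3P [h|h|h]; [exact: partb pp cy h | exact: partb pp cy2 h |
    exact: partb pp cy3 h].
- have N : forall y : rat, (`|numq y| == 1) = (absz (numq y) == 1%N).
    by move=> y; apply/eqP/eqP => h; lia.
  rewrite /count /=.
  have P := pair_lem cy; have P2 := pair_lem cy2; have P3 := pair_lem cy3.
  move: P P2 P3.
  case: eqP => k1; case: eqP => k2; case: eqP => k3 //= P P2 P3; exfalso;
    first [exact: P k1 k2 | exact: P2 k2 k3 | exact: P3 k3 k1].
Qed.
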